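(* Let $\Sigma$ be an arcwise connected metric space and $D\subset\Sigma$ an open subset such that $\overline D$ is not arcwise connected and the boundary $\partial D$ consists of exactly two points. Then $\Sigma\setminus D$ is arcwise connected. *)

(* Defs.v *)
From Stdlib Require Import Reals.
Open Scope R_scope.

Record is_metric {X : Type} (d : X -> X -> R) : Prop := {
  dist_nonneg : forall x y, 0 <= d x y;
  dist_refl   : forall x, d x x = 0;
  dist_sep    : forall x y, d x y = 0 -> x = y;
  dist_sym    : forall x y, d x y = d y x;
  dist_tri    : forall x y z, d x z <= d x y + d y z
}.

Definition is_open {X : Type} (d : X -> X -> R) (D : X -> Prop) : Prop :=
  forall x, D x -> exists eps, 0 < eps /\ forall y, d x y < eps -> D y.

Definition closure {X : Type} (d : X -> X -> R) (D : X -> Prop) : X -> Prop :=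
  fun x => forall eps, 0 < eps -> exists y, D y /\ d x y < eps.

Definition boundary {X : Type} (d : X -> X -> R) (D : X -> Prop) : X -> Prop :=
  fun x => closure d D x /\ closure d (fun y => ~ D y) x.

Definition continuous_on_01 {X : Type} (d : X -> X -> R) (g : R -> X) : Prop :=
  forall t, 0 <= t <= 1 -> forall eps, 0 < eps ->
    exists delta, 0 < delta /\
      forall s, 0 <= s <= 1 -> Rabs (s - t) < delta -> d (g s) (g t) < eps.

(* an arc: an injective continuous map [0,1] -> X (in a metric, hence Hausdorff,
   space it is automatically a homeomorphism onto its image) *)
Definition is_arc {X : Type} (d : X -> X -> R) (g : R -> X) : Prop :=
  continuous_on_01 d g /\
  (forall s t, 0 <= s <= 1 -> 0 <= t <= 1 -> g s = g t -> s = t).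

Definition arcwise_connected {X : Type} (d : X -> X -> R) (A : X -> Prop) : Prop :=
  forall x y, A x -> A y -> x <> y ->
    exists g, is_arc d g /\ g 0 = x /\ g 1 = y /\
      (forall t, 0 <= t <= 1 -> A (g t)).

(* Main.v *)
Require Import Defs.
From Stdlib Require Import Reals Lra Classical.
Open Scope R_scope.

Lemma sup_lemma (P : R -> Prop) (l r : R) : l <= r -> P l ->
  exists m, l <= m <= r /\ (forall t, l <= t <= r -> P t -> t <= m) /\
    (forall m', m' < m -> exists t, m' < t <= m /\ l <= t /\ P t).
Proof.
  intros Hlr Hl.
  set (E := fun t => l <= t <= r /\ P t).
  assert (Hb : bound E) by (exists r; intros t [Ht _]; lra).
  assert (Hne : exists x, E x) by (exists l; split; [lra|exact Hl]).
  destruct (completeness E Hb Hne) as [m [Hub Hlub]].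
  assert (Hlm : l <= m) by (apply Hub; split; [lra|exact Hl]).
  exists m. split; [split|split].
  - exact Hlm.
  - apply Hlub. intros t [Ht _]; lra.
  - intros t Ht Pt. apply Hub. split; assumption.
  - intros m' Hm'. apply NNPP. intro Hno.
    assert (m <= m'); [|lra].
    apply Hlub. intros t [Ht Pt]. destruct (Rle_dec t m') as [|Hgt]; [assumption|].
    exfalso. apply Hno. exists t.
    assert (t <= m) by (apply Hub; split; assumption).
    split; [lra|split;[lra|exact Pt]].
Qed.

Lemma inf_lemma (P : R -> Prop) (l r : R) : l <= r -> P r ->
  exists m, l <= m <= r /\ (forall t, l <= t <= r -> P t -> m <= t) /\
    (forall m', m < m' -> exists t, m <= t < m' /\ t <= r /\ P t).
Proof.
  intros Hlr Hr.
  destruct (sup_lemma (fun t => P (- t)) (- r) (- l)) as [m [Hm [Hub Hap]]].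
  - lra.
  - rewrite Ropp_involutive. exact Hr.
  - exists (- m). split; [lra|split].
    + intros t Ht Pt. assert (- t <= m); [apply Hub; [lra| rewrite Ropp_involutive; exact Pt]|lra].
    + intros m' Hm'. destruct (Hap (- m')) as [t [Ht [Ht2 Pt]]]; [lra|].
      exists (- t). split; [lra|split;[lra|exact Pt]].
Qed.

Definition closedS {X} (d : X -> X -> R) (C : X -> Prop) := forall z, closure d C z -> C z.


Lemma msym {X} (d : X -> X -> R) (hd : is_metric d) x y : d x y = d y x.
Proof. exact (Defs.dist_sym d hd x y). Qed.
Lemma mtri {X} (d : X -> X -> R) (hd : is_metric d) x y z : d x z <= d x y + d y z.
Proof. exact (Defs.dist_tri d hd x y z). Qed.
Lemma mnn {X} (d : X -> X -> R) (hd : is_metric d) x y : 0 <= d x y.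
Proof. exact (Defs.dist_nonneg d hd x y). Qed.

Lemma sup_closed {X} (d : X -> X -> R) (hd : is_metric d) (g : R -> X) (C : X -> Prop) l m :
  continuous_on_01 d g -> closedS d C -> 0 <= l -> l <= m -> m <= 1 ->
  (forall m', m' < m -> exists t, m' < t <= m /\ l <= t /\ C (g t)) -> C (g m).
Proof.
  intros Hg HC Hl Hlm Hm1 Hap. apply HC. intros eps Heps.
  destruct (Hg m ltac:(lra) eps Heps) as [delta [Hdel Hc]].
  destruct (Hap (m - delta)) as [t [Ht [Hlt Ct]]]; [lra|].
  exists (g t). split; [exact Ct|]. rewrite (msym d hd). apply Hc; [lra|]. apply Rabs_def1; lra.
Qed.

Lemma inf_closed {X} (d : X -> X -> R) (hd : is_metric d) (g : R -> X) (C : X -> Prop) m r :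
  continuous_on_01 d g -> closedS d C -> 0 <= m -> m <= r -> r <= 1 ->
  (forall m', m < m' -> exists t, m <= t < m' /\ t <= r /\ C (g t)) -> C (g m).
Proof.
  intros Hg HC Hl Hlm Hm1 Hap. apply HC. intros eps Heps.
  destruct (Hg m ltac:(lra) eps Heps) as [delta [Hdel Hc]].
  destruct (Hap (m + delta)) as [t [Ht [Hlt Ct]]]; [lra|].
  exists (g t). split; [exact Ct|]. rewrite (msym d hd). apply Hc; [lra|]. apply Rabs_def1; lra.
Qed.

Lemma open_compl_closed {X} (d : X -> X -> R) (U : X -> Prop) :
  is_open d U -> closedS d (fun z => ~ U z).
Proof. intros HU z Hz Uz. destruct (HU z Uz) as [eps [He Hb]].
  destruct (Hz eps He) as [y [Hy Hd]]. exact (Hy (Hb y Hd)). Qed.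

Lemma crossing {X} (d : X -> X -> R) (hd : is_metric d) (g : R -> X) (U : X -> Prop) t1 :
  continuous_on_01 d g -> is_open d U -> ~ U (g 0) -> ~ U (g 1) -> 0 <= t1 <= 1 -> U (g t1) ->
  exists a b, 0 <= a < t1 /\ t1 < b <= 1 /\ ~ U (g a) /\ ~ U (g b) /\
    closure d U (g a) /\ closure d U (g b) /\ (forall t, a < t < b -> U (g t)).
Proof.
  intros Hg HU H0 H1 Ht1 Ut1.
  destruct (sup_lemma (fun t => ~ U (g t)) 0 t1) as [a [Ha [Hub Hap]]]; [lra|exact H0|].
  destruct (inf_lemma (fun t => ~ U (g t)) t1 1) as [b [Hb [Hlb Hap2]]]; [lra|exact H1|].
  assert (Na : ~ U (g a)).
  { apply (sup_closed d hd g (fun z => ~ U z) 0 a); try lra; auto.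
    apply open_compl_closed; auto. }
  assert (Nb : ~ U (g b)).
  { apply (inf_closed d hd g (fun z => ~ U z) b 1); try lra; auto.
    apply open_compl_closed; auto. }
  assert (a < t1).
  { destruct (Req_dec a t1) as [e|]; [rewrite e in Na; contradiction|lra]. }
  assert (t1 < b).
  { destruct (Req_dec b t1) as [e|]; [rewrite e in Nb; contradiction|lra]. }
  assert (Hin : forall t, a < t < b -> U (g t)).
  { intros t Ht. apply NNPP. intro Nt. destruct (Rle_dec t t1).
    - assert (t <= a) by (apply Hub; [lra|exact Nt]). lra.
    - assert (b <= t) by (apply Hlb; [lra|exact Nt]). lra. }
  exists a, b. split; [lra|split;[lra|split;[exact Na|split;[exact Nb|split;[|split]]]]].
  - intros eps Heps. destruct (Hg a ltac:(lra) eps Heps) as [delta [Hd Hc]].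
    exists (g (Rmin t1 (a + delta/2))). split.
    + apply Hin. unfold Rmin; destruct Rle_dec; lra.
    + rewrite (msym d hd). apply Hc; [unfold Rmin; destruct Rle_dec; lra|].
      apply Rabs_def1; unfold Rmin; destruct Rle_dec; lra.
  - intros eps Heps. destruct (Hg b ltac:(lra) eps Heps) as [delta [Hd Hc]].
    exists (g (Rmax t1 (b - delta/2))). split.
    + apply Hin. unfold Rmax; destruct Rle_dec; lra.
    + rewrite (msym d hd). apply Hc; [unfold Rmax; destruct Rle_dec; lra|].
      apply Rabs_def1; unfold Rmax; destruct Rle_dec; lra.
  - exact Hin.
Qed.

Lemma closure_mono {X} (d : X -> X -> R) (A B : X -> Prop) z :
  (forall w, A w -> B w) -> closure d A z -> closure d B z.
Proof. intros H Hz eps He. destruct (Hz eps He) as [y [Hy Hd]]. exists y; auto. Qed.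

Lemma in_closure {X} (d : X -> X -> R) (hd : is_metric d) (A : X -> Prop) z :
  A z -> closure d A z.
Proof. intros Hz eps He. exists z. split; auto. rewrite (Defs.dist_refl d hd). exact He. Qed.

Lemma bd_not_in {X} (d : X -> X -> R) (D : X -> Prop) z :
  is_open d D -> boundary d D z -> ~ D z.
Proof. intros HD [_ Hc] Dz. exact (open_compl_closed d D HD z Hc Dz). Qed.

Lemma compl_closure_open {X} (d : X -> X -> R) (hd : is_metric d) (D : X -> Prop) :
  is_open d (fun z => ~ closure d D z).
Proof.
  intros z Hz. assert (exists eps, 0 < eps /\ forall y, D y -> eps <= d z y) as [eps [He Hy]].
  { apply NNPP. intro Hn. apply Hz. intros eps He. apply NNPP. intro Hn2. apply Hn.
    exists eps. split; auto. intros y Dy. destruct (Rle_dec eps (d z y)); auto.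
    exfalso. apply Hn2. exists y. split; auto. lra. }
  exists (eps/2). split; [lra|]. intros w Hw Cw.
  destruct (Cw (eps/2) ltac:(lra)) as [y [Dy Hd]].
  pose proof (Hy y Dy). pose proof (mtri d hd z w y). lra.
Qed.

Lemma img_closed {X} (d : X -> X -> R) (hd : is_metric d) (g : R -> X) lo hi :
  continuous_on_01 d g -> 0 <= lo -> lo <= hi -> hi <= 1 ->
  closedS d (fun z => exists t, lo <= t <= hi /\ g t = z).
Proof.
  intros Hg Hlo Hlh Hhi z Hz.
  set (Q := fun m => forall eps, 0 < eps -> exists t, lo <= t <= m /\ d z (g t) < eps).
  assert (Qhi : Q hi).
  { intros eps He. destruct (Hz eps He) as [y [[t [Ht Hty]] Hd]]. subst y. exists t; auto. }
  destruct (inf_lemma Q lo hi Hlh Qhi) as [m [Hm [Hlb Hap]]].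
  exists m. split; [lra|]. apply NNPP. intro Hne.
  assert (Hr : 0 < d z (g m)).
  { pose proof (mnn d hd z (g m)). destruct (Rle_lt_or_eq_dec _ _ H) as [|e]; auto.
    exfalso. apply Hne. symmetry. apply (Defs.dist_sep d hd). auto. }
  remember (d z (g m)) as r eqn:Er.
  destruct (Hg m ltac:(lra) (r/2) ltac:(lra)) as [delta [Hd Hc]].
  assert (Hlow : exists eps0, 0 < eps0 /\ forall t, lo <= t <= m - delta/2 -> eps0 <= d z (g t)).
  { destruct (Rlt_dec (m - delta/2) lo).
    - exists 1. split; [lra|]. intros; lra.
    - assert (NQ : ~ Q (m - delta/2)).
      { intro Qm. assert (m <= m - delta/2) by (apply Hlb; [lra|exact Qm]). lra. }
      apply NNPP. intro Hn. apply NQ. intros eps He. apply NNPP. intro Hn2. apply Hn.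
      exists eps. split; auto. intros t Ht. destruct (Rle_dec eps (d z (g t))); auto.
      exfalso. apply Hn2. exists t. split; auto. lra. }
  destruct Hlow as [eps0 [He0 Hlow]].
  destruct (Hap (m + delta/2)) as [t [Ht [Hth Qt]]]; [lra|].
  destruct (Qt (Rmin eps0 (r/2))) as [t' [Ht' Hdt']].
  { unfold Rmin; destruct Rle_dec; lra. }
  destruct (Rle_dec t' (m - delta/2)).
  - pose proof (Hlow t' ltac:(lra)). unfold Rmin in Hdt'; destruct Rle_dec in Hdt'; lra.
  - assert (d (g t') (g m) < r/2).
    { apply Hc; [lra|]. apply Rabs_def1; lra. }
    pose proof (mtri d hd z (g t') (g m)).
    unfold Rmin in Hdt'; destruct Rle_dec in Hdt'; lra.
Qed.

Lemma pigeon {X} (x1 x2 x3 p q : X) :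
  (x1 = p \/ x1 = q) -> (x2 = p \/ x2 = q) -> (x3 = p \/ x3 = q) ->
  x1 <> x2 -> x1 <> x3 -> x2 <> x3 -> False.
Proof. intros [->| ->] [->| ->] [->| ->]; intros; congruence. Qed.

Lemma orient {X} (x1 x2 y1 y2 p q : X) :
  (x1 = p \/ x1 = q) -> (x2 = p \/ x2 = q) -> x1 <> x2 ->
  (y1 = p \/ y1 = q) -> (y2 = p \/ y2 = q) -> y1 <> y2 ->
  (x1 = y1 /\ x2 = y2) \/ (x1 = y2 /\ x2 = y1).
Proof. intros [->| ->] [->| ->] ? [->| ->] [->| ->] ?; try congruence; auto. Qed.

Lemma arc_rev {X} (d : X -> X -> R) (g : R -> X) :
  is_arc d g -> is_arc d (fun s => g (1 - s)).
Proof.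
  intros [Hc Hi]. split.
  - intros t Ht eps He. destruct (Hc (1 - t) ltac:(lra) eps He) as [delta [Hd H]].
    exists delta. split; auto. intros s Hs Hst. apply H; [lra|].
    replace (1 - s - (1 - t)) with (- (s - t)) by ring. rewrite Rabs_Ropp. auto.
  - intros s t Hs Ht E. assert (1 - s = 1 - t) by (apply Hi; auto; lra). lra.
Qed.

Definition clamp (b x : R) := Rmax 0 (Rmin b x).

Lemma clamp_range b x : 0 <= b -> 0 <= clamp b x <= b.
Proof. intros; unfold clamp, Rmax, Rmin; repeat destruct Rle_dec; lra. Qed.
Lemma clamp_lo b x : 0 <= b -> x <= 0 -> clamp b x = 0.
Proof. intros; unfold clamp, Rmax, Rmin; repeat destruct Rle_dec; lra. Qed.
Lemma clamp_hi b x : 0 <= b -> b <= x -> clamp b x = b.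
Proof. intros; unfold clamp, Rmax, Rmin; repeat destruct Rle_dec; lra. Qed.
Lemma clamp_id b x : 0 <= x <= b -> clamp b x = x.
Proof. intros; unfold clamp, Rmax, Rmin; repeat destruct Rle_dec; lra. Qed.
Lemma clamp_lip b x y : 0 <= b -> Rabs (clamp b x - clamp b y) <= Rabs (x - y).
Proof. intros; unfold clamp, Rmax, Rmin; repeat destruct Rle_dec; split_Rabs; lra. Qed.

Ltac tri_all d hd x y l :=
  match l with
  | nil => idtac
  | cons ?m ?rest => pose proof (mtri d hd x m y); tri_all d hd x y rest
  end.
Ltac tri2 d hd l1 y l :=
  match l1 with
  | nil => idtac
  | cons ?m ?rest => tri_all d hd m y l; tri2 d hd rest y l
  end.
Ltac sym_all d hd l :=
  match l with
  | nil => idtac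
  | cons ?x ?rest =>
    let rec f l' := match l' with nil => idtac | cons ?z ?r' => pose proof (msym d hd x z); f r' end in
    f l; sym_all d hd rest
  end.

Lemma chain3 {X} (d : X -> X -> R) (hd : is_metric d) (P1 P2 ga a1 a2 a3 gb b1 b2 b3 : X) :
  ((ga = a1 /\ a2 = P1 /\ a3 = P2) \/ (a1 = P1 /\ ga = a2 /\ a3 = P2) \/ (a1 = P1 /\ a2 = P2 /\ ga = a3)) ->
  ((gb = b1 /\ b2 = P1 /\ b3 = P2) \/ (b1 = P1 /\ gb = b2 /\ b3 = P2) \/ (b1 = P1 /\ b2 = P2 /\ gb = b3)) ->
  d ga gb <= d a1 b1 + d a2 b2 + d a3 b3.
Proof.
  intros [[-> [-> ->]]|[[-> [-> ->]]|[-> [-> ->]]]] [[-> [-> ->]]|[[-> [-> ->]]|[-> [-> ->]]]];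
  match goal with |- d ?x ?y <= d ?u1 ?v1 + d ?u2 ?v2 + d ?u3 ?v3 =>
    let l := constr:(cons u1 (cons v1 (cons u2 (cons v2 (cons u3 (cons v3 nil)))))) in
    tri_all d hd x y l; tri2 d hd l y l;
    sym_all d hd (cons x (cons y l));
    pose proof (mnn d hd u1 v1); pose proof (mnn d hd u2 v2); pose proof (mnn d hd u3 v3)
  end; lra.
Qed.

Definition piece {X} (g : R -> X) (al be ga : R) (tau : R) : X := g (al + clamp be (tau - ga)).

Lemma piece_cont {X} (d : X -> X -> R) (g : R -> X) al be ga :
  continuous_on_01 d g -> 0 <= al -> 0 <= be -> al + be <= 1 ->
  forall t0 eps, 0 < eps -> exists delta, 0 < delta /\
    forall t, Rabs (t - t0) < delta -> d (piece g al be ga t) (piece g al be ga t0) < eps.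
Proof.
  intros Hg Hal Hbe Hab t0 eps He. unfold piece.
  pose proof (clamp_range be (t0 - ga) Hbe).
  destruct (Hg (al + clamp be (t0 - ga)) ltac:(lra) eps He) as [delta [Hd Hc]].
  exists delta. split; auto. intros t Ht. pose proof (clamp_range be (t - ga) Hbe).
  apply Hc; [lra|].
  replace (al + clamp be (t - ga) - (al + clamp be (t0 - ga))) with (clamp be (t - ga) - clamp be (t0 - ga)) by ring.
  eapply Rle_lt_trans; [apply clamp_lip; auto|].
  replace (t - ga - (t0 - ga)) with (t - t0) by ring. exact Ht.
Qed.

Lemma splice {X} (d : X -> X -> R) (hd : is_metric d) (D : X -> Prop) (g h : R -> X) a b c e :
  is_arc d g -> is_arc d h -> 0 <= a < b -> b <= 1 -> 0 <= c < e -> e <= 1 ->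
  h c = g a -> h e = g b ->
  (forall t, 0 <= t <= a -> ~ D (g t)) -> (forall t, b <= t <= 1 -> ~ D (g t)) ->
  (forall s, c <= s <= e -> ~ D (h s)) ->
  exists k, is_arc d k /\ k 0 = g 0 /\ k 1 = g 1 /\ (forall t, 0 <= t <= 1 -> ~ D (k t)).
Proof.
  intros [Hgc Hgi] [Hhc Hhi] Hab Hb1 Hce He1 Hca Heb HDa HDb HDh.
  set (A := fun z => exists t, 0 <= t <= a /\ g t = z).
  set (B := fun z => exists t, b <= t <= 1 /\ g t = z).
  assert (cA : closedS d A) by (apply img_closed; auto; lra).
  assert (cB : closedS d B) by (apply img_closed; auto; lra).
  assert (AB : forall z, A z -> B z -> False).
  { intros z [t [Ht <-]] [t' [Ht' E]]. assert (t' = t) by (apply Hgi; auto; lra). lra. }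
  destruct (inf_lemma (fun s => B (h s)) c e) as [s1 [Hs1 [Hlb1 Hap1]]].
  { lra. } { exists b. split; [lra|auto]. }
  assert (Bs1 : B (h s1)) by (apply (inf_closed d hd h B s1 e); auto; lra).
  assert (Ac : A (h c)) by (exists a; split; [lra|auto]).
  assert (cs1 : c < s1).
  { destruct (Req_dec c s1) as [E|]; [|lra]. rewrite <- E in Bs1. exfalso; exact (AB _ Ac Bs1). }
  destruct (sup_lemma (fun s => A (h s)) c s1) as [s0 [Hs0 [Hub0 Hap0]]]; [lra|auto|].
  assert (As0 : A (h s0)) by (apply (sup_closed d hd h A c s0); auto; lra).
  assert (s01 : s0 < s1).
  { destruct (Req_dec s0 s1) as [E|]; [|lra]. rewrite E in As0. exfalso; exact (AB _ As0 Bs1). }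
  assert (nA : forall s, s0 < s <= s1 -> ~ A (h s)).
  { intros s Hs As. assert (s <= s0) by (apply Hub0; auto; lra). lra. }
  assert (nB : forall s, c <= s < s1 -> ~ B (h s)).
  { intros s Hs Bs. assert (s1 <= s) by (apply Hlb1; auto; lra). lra. }
  destruct As0 as [u [Hu Egu]]. destruct Bs1 as [v [Hv Egv]].
  set (w := s1 - s0).
  assert (Ew : w = s1 - s0) by reflexivity.
  set (L := u + w + (1 - v)).
  assert (EL : L = u + w + (1 - v)) by reflexivity.
  assert (HL : 0 < L) by (unfold L, w; lra).
  set (G1 := piece g 0 u 0). set (G2 := piece h s0 w u). set (G3 := piece g v (1 - v) (u + w)).
  set (G := fun tau => if Rle_dec tau u then G1 tau else if Rle_dec tau (u + w) then G2 tau else G3 tau).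
  assert (Hw : 0 < w) by (unfold w; lra).
  assert (Hreg : forall tau,
    ((G tau = G1 tau /\ G2 tau = g u /\ G3 tau = g v) \/
     (G1 tau = g u /\ G tau = G2 tau /\ G3 tau = g v) \/
     (G1 tau = g u /\ G2 tau = g v /\ G tau = G3 tau))).
  { intro tau. unfold G, G1, G2, G3, piece.
    destruct (Rle_dec tau u).
    - left. split; [reflexivity|split].
      + rewrite clamp_lo by lra. rewrite Rplus_0_r. auto.
      + rewrite clamp_lo by lra. rewrite Rplus_0_r. auto.
    - destruct (Rle_dec tau (u + w)).
      + right; left. split; [|split; [reflexivity|]].
        * rewrite clamp_hi by lra. f_equal; ring.
        * rewrite clamp_lo by lra. rewrite Rplus_0_r. auto.
      + right; right. split; [|split; [|reflexivity]].
        * rewrite clamp_hi by lra. f_equal; ring.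
        * rewrite clamp_hi by lra. unfold w. replace (s0 + (s1 - s0)) with s1 by ring. auto. }
  assert (Gcont : forall t0 eps, 0 < eps -> exists delta, 0 < delta /\
            forall t, Rabs (t - t0) < delta -> d (G t) (G t0) < eps).
  { intros t0 eps Heps.
    destruct (piece_cont d g 0 u 0 Hgc ltac:(lra) ltac:(lra) ltac:(lra) t0 (eps/3) ltac:(lra)) as [d1 [Hd1 H1]].
    destruct (piece_cont d h s0 w u Hhc ltac:(lra) ltac:(lra) ltac:(unfold w; lra) t0 (eps/3) ltac:(lra)) as [d2 [Hd2 H2]].
    destruct (piece_cont d g v (1 - v) (u + w) Hgc ltac:(lra) ltac:(lra) ltac:(lra) t0 (eps/3) ltac:(lra)) as [d3 [Hd3 H3]].
    exists (Rmin d1 (Rmin d2 d3)). split.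
    { apply Rmin_pos; [lra|apply Rmin_pos; lra]. }
    intros t Ht.
    assert (Rabs (t - t0) < d1 /\ Rabs (t - t0) < d2 /\ Rabs (t - t0) < d3) as [T1 [T2 T3]].
    { pose proof (Rmin_l d1 (Rmin d2 d3)); pose proof (Rmin_r d1 (Rmin d2 d3));
      pose proof (Rmin_l d2 d3); pose proof (Rmin_r d2 d3); lra. }
    pose proof (chain3 d hd (g u) (g v) _ _ _ _ _ _ _ _ (Hreg t) (Hreg t0)).
    specialize (H1 t T1). specialize (H2 t T2). specialize (H3 t T3).
    fold G1 G2 G3 in H1, H2, H3. lra. }
  assert (Hval : forall tau, 0 <= tau <= L ->
    (tau <= u /\ G tau = g tau) \/
    (u < tau <= u + w /\ G tau = h (s0 + (tau - u))) \/
    (u + w < tau /\ G tau = g (v + (tau - (u + w))))).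
  { intros tau Ht. unfold G, G1, G2, G3, piece.
    destruct (Rle_dec tau u).
    - left. split; auto. rewrite clamp_id by lra. f_equal; ring.
    - destruct (Rle_dec tau (u + w)).
      + right; left. split; [lra|]. rewrite clamp_id by lra. reflexivity.
      + right; right. split; [lra|]. rewrite clamp_id by (unfold L in Ht; lra). reflexivity. }
  assert (A12 : forall t s, 0 <= t <= u -> s0 < s <= s1 -> g t <> h s).
  { intros t s Ht Hs E. apply (nA s Hs). exists t. split; [lra|auto]. }
  assert (A13 : forall t t', 0 <= t <= u -> v < t' <= 1 -> g t <> g t').
  { intros t t' Ht Ht' E. assert (t = t') by (apply Hgi; auto; lra). lra. }
  assert (A23 : forall s t', s0 < s <= s1 -> v < t' <= 1 -> h s <> g t').
  { intros s t' Hs Ht' E. destruct (Rlt_dec s s1).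
    - apply (nB s ltac:(lra)). exists t'. split; [lra|auto].
    - assert (s = s1) by lra. subst s. rewrite <- Egv in E.
      assert (v = t') by (apply Hgi; auto; lra). lra. }
  assert (Ginj : forall t1 t2, 0 <= t1 <= L -> 0 <= t2 <= L -> G t1 = G t2 -> t1 = t2).
  { intros t1 t2 H1 H2 E.
    destruct (Hval t1 H1) as [[R1 V1]|[[R1 V1]|[R1 V1]]];
    destruct (Hval t2 H2) as [[R2 V2]|[[R2 V2]|[R2 V2]]];
    rewrite V1, V2 in E; unfold L in H1, H2.
    - apply Hgi; auto; lra.
    - exfalso; apply (A12 t1 (s0 + (t2 - u))); auto; lra.
    - exfalso; apply (A13 t1 (v + (t2 - (u + w)))); auto; lra.
    - exfalso; apply (A12 t2 (s0 + (t1 - u))); auto; lra.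
    - assert (s0 + (t1 - u) = s0 + (t2 - u)) by (apply Hhi; auto; lra). lra.
    - exfalso; apply (A23 (s0 + (t1 - u)) (v + (t2 - (u + w)))); auto; lra.
    - exfalso; apply (A13 t2 (v + (t1 - (u + w)))); auto; lra.
    - exfalso; apply (A23 (s0 + (t2 - u)) (v + (t1 - (u + w)))); auto; lra.
    - assert (v + (t1 - (u + w)) = v + (t2 - (u + w))) by (apply Hgi; auto; lra). lra. }
  exists (fun t => G (t * L)). split; [split|split; [|split]].
  - intros t Ht eps Heps. destruct (Gcont (t * L) eps Heps) as [delta [Hd Hc]].
    exists (delta / L). split; [apply Rdiv_lt_0_compat; auto|].
    intros s Hs Hst. apply Hc.
    replace (s * L - t * L) with ((s - t) * L) by ring.
    rewrite Rabs_mult, (Rabs_right L) by lra.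
    apply Rmult_lt_reg_r with (/ L); [apply Rinv_0_lt_compat; auto|].
    rewrite Rmult_assoc, Rinv_r, Rmult_1_r by lra. exact Hst.
  - intros s t Hs Ht E. apply Ginj in E.
    + apply Rmult_eq_reg_r with L; auto; lra.
    + split; [apply Rmult_le_pos; lra|]. rewrite <- (Rmult_1_l L) at 2. apply Rmult_le_compat_r; lra.
    + split; [apply Rmult_le_pos; lra|]. rewrite <- (Rmult_1_l L) at 2. apply Rmult_le_compat_r; lra.
  - rewrite Rmult_0_l. destruct (Hval 0 ltac:(lra)) as [[_ V]|[[R _]|[R _]]]; auto; lra.
  - rewrite Rmult_1_l. destruct (Hval L ltac:(lra)) as [[R V]|[[R V]|[R V]]].
    + unfold L in R; lra.
    + rewrite V. assert (v = 1) by (unfold L in R; lra).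
      replace (s0 + (L - u)) with s1 by (unfold L, w; rewrite H; ring).
      rewrite <- Egv, H. reflexivity.
    + rewrite V. f_equal. unfold L; ring.
  - intros t Ht.
    assert (0 <= t * L <= L).
    { split; [apply Rmult_le_pos; lra|]. rewrite <- (Rmult_1_l L) at 2. apply Rmult_le_compat_r; lra. }
    destruct (Hval (t * L) H) as [[R V]|[[R V]|[R V]]]; rewrite V.
    + apply HDa; lra.
    + apply HDh; lra.
    + apply HDb; lra.
Qed.

Theorem mainTheorem10 (X : Type) (d : X -> X -> R) (hd : is_metric d)
  (D : X -> Prop)
  (hconn : arcwise_connected d (fun _ => True))
  (hopen : is_open d D)
  (hclos : ~ arcwise_connected d (closure d D))
  (hbd : exists p q, p <> q /\ forall x, boundary d D x <-> (x = p \/ x = q)) :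
  arcwise_connected d (fun x => ~ D x).
Proof.
  destruct hbd as [p [q [Hpq Hbd]]].
  assert (pq_arc : exists h c e, is_arc d h /\ 0 <= c < e /\ e <= 1 /\
            (h c = p \/ h c = q) /\ (h e = p \/ h e = q) /\ h c <> h e /\
            (forall s, c <= s <= e -> ~ D (h s))).
  { apply NNPP. intro Hno. apply hclos. intros u v Hu Hv Huv.
    destruct (hconn u v I I Huv) as [g [Hg [H0 [H1 _]]]].
    exists g. split; [auto|split; [auto|split; [auto|]]].
    intros t Ht. apply NNPP. intro Nt. apply Hno.
    pose proof Hg as [Hgc Hgi].
    destruct (crossing d hd g (fun z => ~ closure d D z) t Hgc (compl_closure_open d hd D))
      as [a [b [Ha [Hb [Na [Nb [Ca [Cb Hin]]]]]]]]; auto.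
    { rewrite H0. intro H; exact (H Hu). }
    { rewrite H1. intro H; exact (H Hv). }
    assert (Hsub : forall w, ~ closure d D w -> ~ D w).
    { intros w Hw Dw. exact (Hw (in_closure d hd D w Dw)). }
    assert (Bda : boundary d D (g a)).
    { split; [apply NNPP; exact Na|]. apply (closure_mono d _ _ _ Hsub Ca). }
    assert (Bdb : boundary d D (g b)).
    { split; [apply NNPP; exact Nb|]. apply (closure_mono d _ _ _ Hsub Cb). }
    exists g, a, b. split; [auto|split; [lra|split; [lra|split; [|split; [|split]]]]].
    - apply Hbd; auto.
    - apply Hbd; auto.
    - intro E. assert (a = b) by (apply Hgi; auto; lra). lra.
    - intros s Hs. destruct (Req_dec s a) as [->|]; [apply (bd_not_in d); auto|].
      destruct (Req_dec s b) as [->|]; [apply (bd_not_in d); auto|].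
      apply Hsub, Hin; lra. }
  intros x y Hx Hy Hxy.
  destruct (hconn x y I I Hxy) as [g [Hg [Hg0 [Hg1 _]]]].
  pose proof Hg as [Hgc Hgi].
  destruct (classic (exists t1, 0 <= t1 <= 1 /\ D (g t1))) as [[t1 [Ht1 Dt1]] | Hno].
  2:{ exists g. split; [auto|split; [auto|split; [auto|]]].
      intros t Ht Dt. apply Hno. exists t; auto. }
  assert (G0 : ~ D (g 0)) by (rewrite Hg0; auto).
  assert (G1 : ~ D (g 1)) by (rewrite Hg1; auto).
  assert (Hpt : forall s, 0 <= s <= 1 -> ~ D (g s) -> closure d D (g s) -> g s = p \/ g s = q).
  { intros s Hs Ns Cs. apply Hbd. split; auto. apply in_closure; auto. }
  destruct (crossing d hd g D t1 Hgc hopen G0 G1 Ht1 Dt1)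
    as [a [b [Ha [Hb [Na [Nb [Ca [Cb Hin]]]]]]]].
  assert (Pa : g a = p \/ g a = q) by (apply Hpt; auto; lra).
  assert (Pb : g b = p \/ g b = q) by (apply Hpt; auto; lra).
  assert (Hne : forall s t, 0 <= s <= 1 -> 0 <= t <= 1 -> s <> t -> g s <> g t).
  { intros s t Hs Ht Hst E. apply Hst. apply Hgi; auto. }
  assert (Left : forall t, 0 <= t <= a -> ~ D (g t)).
  { intros t Ht Dt.
    destruct (crossing d hd g D t Hgc hopen G0 G1 ltac:(lra) Dt)
      as [a2 [b2 [Ha2 [Hb2 [Na2 [Nb2 [Ca2 [Cb2 Hin2]]]]]]]].
    assert (b2 <= a).
    { destruct (Rle_dec b2 a); auto. exfalso. apply Na. apply Hin2. lra. }
    apply (pigeon (g a2) (g b2) (g b) p q).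
    - apply Hpt; auto; lra.
    - apply Hpt; auto; lra.
    - exact Pb.
    - apply Hne; lra.
    - apply Hne; lra.
    - apply Hne; lra. }
  assert (Right : forall t, b <= t <= 1 -> ~ D (g t)).
  { intros t Ht Dt.
    destruct (crossing d hd g D t Hgc hopen G0 G1 ltac:(lra) Dt)
      as [a2 [b2 [Ha2 [Hb2 [Na2 [Nb2 [Ca2 [Cb2 Hin2]]]]]]]].
    assert (b <= a2).
    { destruct (Rle_dec b a2); auto. exfalso. apply Nb. apply Hin2. lra. }
    apply (pigeon (g a) (g a2) (g b2) p q).
    - exact Pa.
    - apply Hpt; auto; lra.
    - apply Hpt; auto; lra.
    - apply Hne; lra.
    - apply Hne; lra.
    - apply Hne; lra. }
  assert (Hab : g a <> g b) by (apply Hne; lra).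
  destruct pq_arc as [h [c [e [Hh [Hce [He1 [Pc [Pe [Hcne HDh]]]]]]]]].
  destruct (orient (h c) (h e) (g a) (g b) p q Pc Pe Hcne Pa Pb Hab) as [[E1 E2]|[E1 E2]].
  - destruct (splice d hd D g h a b c e Hg Hh ltac:(lra) ltac:(lra) ltac:(lra) ltac:(lra) E1 E2 Left Right HDh)
      as [k [Hk [Hk0 [Hk1 HkD]]]].
    exists k. rewrite <- Hg0, <- Hg1. auto.
  - destruct (splice d hd D g (fun s => h (1 - s)) a b (1 - e) (1 - c) Hg (arc_rev d h Hh)
       ltac:(lra) ltac:(lra) ltac:(lra) ltac:(lra)) as [k [Hk [Hk0 [Hk1 HkD]]]].
    + replace (1 - (1 - e)) with e by ring. auto.
    + replace (1 - (1 - c)) with c by ring. auto.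
    + exact Left.
    + exact Right.
    + intros s Hs. apply HDh. lra.
    + exists k. rewrite <- Hg0, <- Hg1. auto.
Qed.
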